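(* Identify cells of the square lattice with points $(x,y)\in\mathbb{Z}^2$. A (fixed) polyomino is a finite edge-connected set of cells, counted up to translation. For $n\ge 1$, let $f(n)$ be the number of pairs $(P,c)$ where $P$ is a polyomino with $n$ cells and $c=(x,y)$ is a cell of $P$ such that none of the cells $(x-1,y-1)$, $(x,y-1)$, $(x+1,y-1)$ belongs to $P$ (Type A). Let $g(n)$ be the number of such pairs for which, in addition, the cell $(x-1,y)$ does not belong to $P$ (Type B). Set $f(0)=g(0)=1$. Define $F(n)$ and $G(n)$ by $F(0)=F(1)=G(0)=G(1)=1$ and, for $n\ge 2$, \[ F(n)=G(n)+\sum_{\ell,m\ge 1,\ \ell+m=n} G(\ell)G(m),\qquad G(n)=F(n-1)+G(n-1)+\sum_{\ell,m\ge 1,\ \ell+m=n-1} G(\ell)G(m). \] Then $f(n)\le F(n)$ and $g(n)\le G(n)$ for all $n\ge 0$.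
   Context: Pairs $(P,c)$ are counted with $P$ up to translation (equivalently, a pair is determined by the translation class of $(P,c)$). Cells are edge-adjacent if they share an edge; a polyomino is an edge-connected finite set of cells. *)

(* Defs.v *)
From HB Require Import structures.
From mathcomp Require Import all_boot all_order all_algebra.
From mathcomp Require Import finmap.
From mathcomp Require Import classical_sets cardinality.
Set Implicit Arguments. Unset Strict Implicit. Unset Printing Implicit Defensive.
Import Order.TTheory GRing.Theory Num.Theory.
Local Open Scope fset_scope.

Definition cell := (int * int)%type.

Definition adj : rel cell :=
  fun a b => (`|(a.1 - b.1)%R|%N + `|(a.2 - b.2)%R|%N == 1)%N.

Definition edge_connected (P : {fset cell}) : Prop :=
  forall x y, x \in P -> y \in P ->
    exists p : seq cell, [/\ path adj x p, last x p = y & all (fun z => z \in P) p].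

Definition polyomino_n (n : nat) (P : {fset cell}) : Prop :=
  edge_connected P /\ #|` P| = n.

Definition shift (c : cell) (dx dy : int) : cell := (c.1 + dx, c.2 + dy)%R.

Definition typeA (P : {fset cell}) (c : cell) : bool :=
  [&& c \in P, shift c (-1) (-1) \notin P, shift c 0 (-1) \notin P
    & shift c 1 (-1) \notin P].

Definition typeB (P : {fset cell}) (c : cell) : bool :=
  typeA P c && (shift c (-1) 0 \notin P).

Definition origin : cell := (0%R, 0%R).

(* Pairs (P, c) up to translation: every translation class contains exactly one
   pair with c at the origin, so classes are in bijection with the sets below. *)
Definition pairsA (n : nat) : set {fset cell} :=
  [set P | polyomino_n n P /\ typeA P origin].
Definition pairsB (n : nat) : set {fset cell} :=
  [set P | polyomino_n n P /\ typeB P origin].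

Definition f (n : nat) : nat := if n == 0%N then 1%N else #|` fset_set (pairsA n)|.
Definition g (n : nat) : nat := if n == 0%N then 1%N else #|` fset_set (pairsB n)|.

(* Main.v *)
Require Import Defs.
From HB Require Import structures.
From mathcomp Require Import all_boot all_order all_algebra.
From mathcomp Require Import finmap.
From mathcomp Require Import boolp classical_sets cardinality.
From mathcomp Require Import zify.
Set Implicit Arguments. Unset Strict Implicit. Unset Printing Implicit Defensive.
Import Order.TTheory GRing.Theory Num.Theory.
Local Open Scope fset_scope.

Lemma adjC a b : adj a b = adj b a.
Proof. rewrite /adj; apply/eqP/eqP; lia. Qed.

Inductive conn (S : cell -> bool) : cell -> cell -> Prop :=
| conn_refl x : conn S x x
| conn_step x y z : adj x y -> S y -> conn S y z -> conn S x z.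

Lemma conn_trans (S : cell -> bool) x y z : conn S x y -> conn S y z -> conn S x z.
Proof. elim=> // u v w Huv Sv _ IH /IH; exact: conn_step. Qed.

Lemma conn_sym (S : cell -> bool) x y : S x -> conn S x y -> conn S y x.
Proof.
move=> Sx H; elim: H Sx => [u|u v w Huv Sv _ IH] Su; first exact: conn_refl.
apply: conn_trans (IH Sv) _; apply: (conn_step _ Su) (conn_refl _ _).
by rewrite adjC.
Qed.

Lemma conn_mono (S S' : cell -> bool) x y :
  (forall z, S z -> S' z) -> conn S x y -> conn S' x y.
Proof.
move=> SS; elim=> [u|u v w Huv Sv _ IH]; first exact: conn_refl.
exact: conn_step Huv (SS _ Sv) IH.
Qed.

Lemma conn_map (S S' : cell -> bool) (h : cell -> cell) x y :
  (forall u v, adj u v -> adj (h u) (h v)) ->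
  (forall z, S z -> S' (h z)) -> conn S x y -> conn S' (h x) (h y).
Proof.
move=> Ha SS; elim=> [u|u v w Huv Sv _ IH]; first exact: conn_refl.
exact: conn_step (Ha _ _ Huv) (SS _ Sv) IH.
Qed.

Lemma pathP (S : cell -> bool) x y :
  (exists p : seq cell, [/\ path adj x p, last x p = y & all S p]) <-> conn S x y.
Proof.
split.
  case=> p; elim: p x => [|z p IH] x /= [Hp Hl Ha]; first by rewrite -Hl; exact: conn_refl.
  case/andP: Hp => Hxz Hp; case/andP: Ha => Sz Ha.
  exact: conn_step Hxz Sz (IH z (And3 Hp Hl Ha)).
elim=> [u|u v w Huv Sv _ [p [Hp Hl Ha]]]; first by exists [::].
by exists (v :: p); rewrite /= Huv Sv Hp Ha Hl.
Qed.

Definition conn_set (P : {fset cell}) := forall x y, x \in P -> y \in P -> conn (fun z => z \in P) x y.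

Lemma edge_connectedP P : edge_connected P <-> conn_set P.
Proof.
split=> H x y Hx Hy; first by apply/pathP; exact: H.
by apply/pathP; exact: H.
Qed.
Section Split.
Variables (S : {fset cell}) (a b : cell).
Definition Sa := S `\ a.
Definition Q2 := [fset z in Sa | `[< conn (fun w => w \in Sa) b z >]].
Definition Q1 := S `\` Q2.

Lemma inQ2 z : (z \in Q2) = (z \in Sa) && `[< conn (fun w => w \in Sa) b z >].
Proof. by rewrite !inE. Qed.

Lemma Q2_sub z : z \in Q2 -> z \in S.
Proof. by rewrite inQ2 /Sa in_fsetD1 => /andP[/andP[]]. Qed.
Lemma Q2_neqa z : z \in Q2 -> z != a.
Proof. by rewrite inQ2 /Sa in_fsetD1 => /andP[/andP[]]. Qed.
Lemma Q1_sub z : z \in Q1 -> z \in S.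
Proof. by rewrite /Q1 inE => /andP[]. Qed.
Lemma inQ1 z : (z \in Q1) = (z \notin Q2) && (z \in S).
Proof. by rewrite /Q1 inE. Qed.

Hypothesis (aS : a \in S) (bS : b \in S) (ab : a != b).

Lemma b_Q2 : b \in Q2.
Proof.
rewrite inQ2 /Sa in_fsetD1 bS eq_sym ab /=; apply/asboolP; exact: conn_refl.
Qed.
Lemma a_Q1 : a \in Q1.
Proof. by rewrite inQ1 aS andbT; apply/negP => /Q2_neqa; rewrite eqxx. Qed.

Lemma Q2_close x y : x \in Q2 -> y \in Sa -> adj x y -> y \in Q2.
Proof.
rewrite !inQ2 => /andP[xS /asboolP Hx] yS Hxy; rewrite yS /=; apply/asboolP.
apply: conn_trans Hx _; exact: conn_step Hxy yS (conn_refl _ _).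
Qed.

Lemma conn_Q2 x y : x \in Q2 -> conn (fun w => w \in Sa) x y ->
  conn (fun w => w \in Q2) x y.
Proof.
move=> xQ H; elim: H xQ => [u|u v w Huv Sv _ IH] uQ; first exact: conn_refl.
have vQ := Q2_close uQ Sv Huv.
exact: conn_step Huv vQ (IH vQ).
Qed.

Lemma Q2_conn : conn_set Q2.
Proof.
move=> x y xQ yQ; apply: conn_Q2 => //.
move: (xQ) (yQ); rewrite !inQ2 => /andP[xS /asboolP Hx] /andP[yS /asboolP Hy].
have bSa : b \in Sa by rewrite /Sa in_fsetD1 eq_sym ab bS.
exact: conn_trans (conn_sym bSa Hx) Hy.
Qed.

Lemma Q1_to_a z t : conn (fun w => w \in S) z t -> z \in S -> (t = a \/ t = b) ->
  z \notin Q2 -> conn (fun w => w \in Q1) z a.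
Proof.
elim=> [u|u v w Huv Sv _ IH] uS Ht uQ.
  case: Ht => ?; subst u; first exact: conn_refl.
  by rewrite b_Q2 in uQ.
case: (eqVneq u a) => [->|ua]; first exact: conn_refl.
have vQ : v \notin Q2.
  apply/negP => vQ; move/negP: uQ; apply.
  apply: (Q2_close vQ); first by rewrite /Sa in_fsetD1 ua uS.
  by rewrite adjC.
apply: conn_step Huv _ (IH Sv Ht vQ).
by rewrite inQ1 vQ Sv.
Qed.

Hypothesis HS : forall z, z \in S ->
  conn (fun w => w \in S) z a \/ conn (fun w => w \in S) z b.

Lemma Q1_conn : conn_set Q1.
Proof.
have H z : z \in Q1 -> conn (fun w => w \in Q1) z a.
  rewrite inQ1 => /andP[zQ zS].
  by case: (HS zS) => Hz; apply: Q1_to_a Hz zS _ zQ; [left|right].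
move=> x y xQ yQ; exact: conn_trans (H _ xQ) (conn_sym yQ (H _ yQ)).
Qed.

Lemma Q12_union : Q1 `|` Q2 = S.
Proof.
apply/fsetP => z; rewrite inE inQ1; case: (boolP (z \in Q2)) => /= zQ.
  by rewrite (Q2_sub zQ).
by rewrite orbF.
Qed.

Lemma Q12_card : (#|` Q1| + #|` Q2|)%N = #|` S|.
Proof.
rewrite /Q1 addnC; have : Q2 `<=` S by apply/fsubsetP => z /Q2_sub.
move=> sub; rewrite (cardfsDS sub) subnKC //; exact: fsubset_leq_card.
Qed.

End Split.
Definition transp (d : cell) : cell := (d.2, d.1).
Definition mirr (d : cell) : cell := ((- d.1)%R, d.2).
Definition rotcw (d : cell) : cell := (d.2, (- d.1)%R).
Definition rotccw (d : cell) : cell := ((- d.2)%R, d.1).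
Definition mv (L : cell -> cell) (a z : cell) : cell := L ((z.1 - a.1)%R, (z.2 - a.2)%R).
Definition mvinv (Li : cell -> cell) (a x : cell) : cell :=
  (((Li x).1 + a.1)%R, ((Li x).2 + a.2)%R).

Record good (L Li : cell -> cell) := Good {
  gK : cancel L Li; gKV : cancel Li L; gadj : forall u v, adj (L u) (L v) = adj u v }.

Lemma good_id : good id id.
Proof. by split. Qed.
Lemma good_transp : good transp transp.
Proof. by split; [case|case|move=> [u1 u2][v1 v2]; rewrite /adj /=; apply/eqP/eqP; lia]. Qed.
Lemma good_mirr : good mirr mirr.
Proof.
split; [case=> ? ? /=; rewrite /mirr /= opprK //|case=> ? ? /=; rewrite /mirr /= opprK //|].
by move=> [u1 u2][v1 v2]; rewrite /adj /=; apply/eqP/eqP; lia.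
Qed.
Lemma good_rotcw : good rotcw rotccw.
Proof.
split; [case=> ? ? /=; rewrite /rotcw /rotccw /= opprK //|case=> ? ? /=; rewrite /rotcw /rotccw /= opprK //|].
by move=> [u1 u2][v1 v2]; rewrite /adj /=; apply/eqP/eqP; lia.
Qed.

Section Mv.
Variables (L Li : cell -> cell) (HL : good L Li) (a : cell).

Lemma mvK : cancel (mv L a) (mvinv Li a).
Proof.
move=> [z1 z2]; rewrite /mv /mvinv (gK HL) /=; congr pair; lia.
Qed.
Lemma mvKV : cancel (mvinv Li a) (mv L a).
Proof.
move=> x; rewrite /mv /mvinv /=.
have -> : (((Li x).1 + a.1 - a.1)%R, ((Li x).2 + a.2 - a.2)%R) = Li x.
  by case: (Li x) => ? ? /=; congr pair; lia.
by rewrite (gKV HL).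
Qed.
Lemma mv_inj : injective (mv L a).
Proof. exact: can_inj mvK. Qed.

Lemma mem_mv (A : {fset cell}) x : (x \in mv L a @` A) = (mvinv Li a x \in A).
Proof. by rewrite -{1}(mvKV x) (mem_imfset _ _ mv_inj). Qed.

Lemma mv_adj u v : adj (mv L a u) (mv L a v) = adj u v.
Proof.
rewrite /mv (gadj HL); case: u v => [u1 u2] [v1 v2]; rewrite /adj /=.
by apply/eqP/eqP; lia.
Qed.

Lemma card_mv (A : {fset cell}) : #|` mv L a @` A| = #|` A|.
Proof. by rewrite (card_imfset _ _ mv_inj). Qed.

Lemma conn_mv (A : {fset cell}) : conn_set A -> conn_set (mv L a @` A).
Proof.
move=> H x y; rewrite !mem_mv => hx hy.
rewrite -(mvKV x) -(mvKV y).
apply: conn_map (H _ _ hx hy).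
  by move=> u v; rewrite mv_adj.
by move=> z zA; rewrite mem_mv mvK.
Qed.

Lemma mv_eq (A B : {fset cell}) : mv L a @` A = mv L a @` B -> A = B.
Proof.
move=> E; apply/fsetP => z.
by rewrite -{1}(mvK z) -mem_mv E mem_mv mvK.
Qed.

End Mv.

Lemma test : mvinv mirr (0%R, 1%R) (shift origin (-1) (-1)) = (1%R, 0%R).
Proof. vm_compute. reflexivity. Qed.
Definition d1 (z : cell) : nat := (`|z.1|%N + `|z.2|%N)%N.

Lemma adj_d1 x y : adj x y -> (d1 y <= (d1 x).+1)%N.
Proof. rewrite /adj /d1 => /eqP; lia. Qed.

Lemma conn_ivt (S : cell -> bool) x y : conn S x y -> S x ->
  forall k, (d1 x <= k <= d1 y)%N -> exists w, S w /\ d1 w = k.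
Proof.
elim=> [u|u v w Huv Sv _ IH] Su k /andP[h1 h2].
  by exists u; split => //; apply/eqP; rewrite eqn_leq h1 h2.
case: (eqVneq k (d1 u)) => [->|ne]; first by exists u.
apply: IH => //; have := adj_d1 Huv; lia.
Qed.

Lemma d1_bound (P : {fset cell}) z : conn_set P -> origin \in P -> z \in P ->
  (d1 z < #|` P|)%N.
Proof.
move=> Pc oP zP.
have H k : (k <= d1 z)%N -> k \in [seq d1 w | w <- enum_fset P].
  move=> hk; have [|w [wP <-]] := conn_ivt (Pc _ _ oP zP) oP (k:=k).
    by rewrite /d1 /origin /=.
  exact: map_f.
have := uniq_leq_size (iota_uniq 0 (d1 z).+1) (s2 := [seq d1 w | w <- enum_fset P]).
rewrite size_iota size_map; apply => k; rewrite mem_iota add0n ltnS; exact: H.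
Qed.

Definition rng (n : nat) : seq int := [seq (Posz k - Posz n)%R | k <- iota 0 (n + n).+1].
Definition box (n : nat) : {fset cell} := seq_fset tt [seq (i, j) | i <- rng n, j <- rng n].

Lemma in_rng n (i : int) : (`|i| <= n)%N -> i \in rng n.
Proof.
move=> h; apply/mapP; exists `|(i + Posz n)%R|%N; last by lia.
rewrite mem_iota; lia.
Qed.

Lemma in_box n z : (d1 z <= n)%N -> z \in box n.
Proof.
rewrite /d1 /box seq_fsetE => h; case: z h => [i j] h; rewrite /= in h.
by apply: (allpairs_f pair); apply: in_rng; lia.
Qed.

Lemma finite_poly (n : nat) (A : set {fset cell}) :
  (forall P, A P -> polyomino_n n P /\ origin \in P) -> finite_set A.
Proof.
move=> HA; apply: (@finite_subfset _ (fpowerset (box n))) => P /HA [[Pc Pn] oP].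
rewrite /= fpowersetE; apply/fsubsetP => z zP; apply: in_box.
move/edge_connectedP: Pc => Pc; have := d1_bound Pc oP zP; rewrite Pn; lia.
Qed.

Lemma finA n : finite_set (pairsA n).
Proof. by apply: (@finite_poly n) => P [h /and4P[? _ _ _]]; split. Qed.
Lemma finB n : finite_set (pairsB n).
Proof. by apply: (@finite_poly n) => P [h /andP[/and4P[? _ _ _] _]]; split. Qed.
Local Notation cN := (0%R, 1%R).
Local Notation cE := (1%R, 0%R).
Local Notation cW := ((- 1)%R, 0%R).
Local Notation cS := (0%R, (- 1)%R).
Local Notation cSW := ((- 1)%R, (- 1)%R).
Local Notation cSE := (1%R, (- 1)%R).
Local Notation cNE := (1%R, 1%R).

Ltac norm := rewrite /shift /= ?(opprK, oppr0, add0r, addr0, addNr, addrN).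

Lemma typeA_facts P : typeA P origin ->
  [/\ origin \in P, cSW \notin P, cS \notin P & cSE \notin P].
Proof. by rewrite /typeA; norm => /and4P. Qed.

Lemma typeB_facts P : typeB P origin ->
  [/\ origin \in P, cSW \notin P, cS \notin P, cSE \notin P & cW \notin P].
Proof. by rewrite /typeB /typeA; norm => /andP[/and4P[? ? ? ?] ?]. Qed.

Lemma adj0 y : adj y origin -> [\/ y = cE, y = cW, y = cN | y = cS].
Proof.
case: y => [y1 y2]; rewrite /adj /= !subr0 => /eqP h.
have : ((y1 = 1 /\ y2 = 0) \/ (y1 = -1 /\ y2 = 0) \/ (y1 = 0 /\ y2 = 1) \/ (y1 = 0 /\ y2 = -1))%R by lia.
by case=> [[-> ->]|[[-> ->]|[[-> ->]|[-> ->]]]]; [apply: Or41|apply: Or42|apply: Or43|apply: Or44].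
Qed.

Lemma conn_remove (P : {fset cell}) c z : z \in P -> z != c ->
  conn (fun w => w \in P) z c ->
  exists y, [/\ adj y c, y \in P & conn (fun w => w \in P `\ c) z y].
Proof.
move=> zP zc H; elim: H zP zc => [u|u v w Huv Sv Hc IH] uP uc.
  by rewrite eqxx in uc.
case: (eqVneq v w) => [vw|vw].
  subst v; exists u; split => //; exact: conn_refl.
have [y [h1 h2 h3]] := IH Sv vw; exists y; split => //.
by apply: conn_step Huv _ h3; rewrite in_fsetD1 vw Sv.
Qed.

Lemma polyo_mv L Li (HL : good L Li) a Q n :
  conn_set Q -> #|` Q| = n -> polyomino_n n (mv L a @` Q).
Proof.
move=> Qc Qn; split; first by apply/edge_connectedP; exact: (conn_mv HL).
by rewrite (card_mv HL).
Qed.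

Lemma card_D0 (P : {fset cell}) n : origin \in P -> #|` P| = n -> #|` P `\ origin| = n.-1.
Proof. by move=> oP; rewrite (cardfsD1 origin P) oP add1n => <-. Qed.

Section TypeB.
Variables (P : {fset cell}) (n : nat).
Hypotheses (Pc : conn_set P) (Pn : #|` P| = n) (n2 : (2 <= n)%N) (HB : typeB P origin).
Let S := P `\ origin.

Lemma oP : origin \in P. Proof. by case: (typeB_facts HB). Qed.

Lemma nbrsB z : z \in S -> exists y, [/\ y \in P, (y = cN \/ y = cE) &
   conn (fun w => w \in S) z y].
Proof.
rewrite /S in_fsetD1 => /andP[zo zP].
have [y [hy yP hc]] := conn_remove zP zo (Pc zP oP).
exists y; split => //.
case: (typeB_facts HB) => _ _ hS _ hW.
by case: (adj0 hy) => ?; subst y; [right|rewrite yP in hW|left|rewrite yP in hS].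
Qed.

Lemma S_nonempty : exists z, z \in S.
Proof.
have : (0 < #|` S|)%N by rewrite /S (card_D0 oP Pn); lia.
by rewrite cardfs_gt0 => /fset0Pn.
Qed.

Lemma S_card : #|` S| = n.-1.
Proof. exact: card_D0 oP Pn. Qed.
End TypeB.
Definition hB (P : {fset cell}) : nat * {fset cell} * {fset cell} :=
  let S := P `\ origin in
  if cE \notin P then (0%N, mv id cN @` S, fset0)
  else if cN \notin P then (1%N, mv transp cE @` S, fset0)
  else ((#|` Q1 S cN cE|).+1, mv mirr cN @` Q1 S cN cE, mv transp cE @` Q2 S cN cE).

Section TypeB2.
Variables (P : {fset cell}) (n : nat).
Hypotheses (Pc : conn_set P) (Pn : #|` P| = n) (n2 : (2 <= n)%N) (HB : typeB P origin).
Let S := P `\ origin.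

Lemma caseB1 : cE \notin P -> pairsA n.-1 (mv id cN @` S).
Proof.
move=> EP; have [o1 o2 o3 o4 o5] := typeB_facts HB.
have NS : cN \in S.
  have [z zS] := S_nonempty Pn n2 HB.
  have [y [yP hy _]] := nbrsB Pc HB zS.
  by case: hy => ?; subst y; [rewrite in_fsetD1 yP|rewrite yP in EP].
split; first apply: (polyo_mv good_id).
- move=> x y xS yS.
  have [x0 [x0P hx0 hx]] := nbrsB Pc HB xS.
  case: hx0 => ?; subst x0; last by rewrite x0P in EP.
  have [y0 [y0P hy0 hy]] := nbrsB Pc HB yS.
  case: hy0 => ?; subst y0; last by rewrite y0P in EP.
  exact: conn_trans hx (conn_sym yS hy).
- exact: card_D0 (oP HB) Pn.
rewrite /typeA !(mem_mv good_id) /mvinv; norm.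
by rewrite NS /S !in_fsetD1 o5 EP /origin eqxx.
Qed.

Lemma caseB2 : cE \in P -> cN \notin P -> pairsB n.-1 (mv transp cE @` S).
Proof.
move=> EP NP; have [o1 o2 o3 o4 o5] := typeB_facts HB.
have ES : cE \in S by rewrite in_fsetD1 EP.
split; first apply: (polyo_mv good_transp).
- move=> x y xS yS.
  have [x0 [x0P hx0 hx]] := nbrsB Pc HB xS.
  case: hx0 => ?; subst x0; first by rewrite x0P in NP.
  have [y0 [y0P hy0 hy]] := nbrsB Pc HB yS.
  case: hy0 => ?; subst y0; first by rewrite y0P in NP.
  exact: conn_trans hx (conn_sym yS hy).
- exact: card_D0 (oP HB) Pn.
rewrite /typeB /typeA !(mem_mv good_transp) /mvinv /transp; norm.
by rewrite ES /S !in_fsetD1 o3 NP o4 /origin eqxx.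
Qed.

Lemma caseB3 : cE \in P -> cN \in P ->
  let l := #|` Q1 S cN cE| in
  [/\ (1 <= l < n.-1)%N, pairsB l (mv mirr cN @` Q1 S cN cE)
    & pairsB (n.-1 - l) (mv transp cE @` Q2 S cN cE)].
Proof.
move=> EP NP l; have [o1 o2 o3 o4 o5] := typeB_facts HB.
have ES : cE \in S by rewrite in_fsetD1 EP.
have NS : cN \in S by rewrite in_fsetD1 NP.
have ab : cN != cE :> cell by vm_compute.
have HS z : z \in S -> conn (fun w => w \in S) z cN \/ conn (fun w => w \in S) z cE.
  move=> zS; have [y [_ hy hz]] := nbrsB Pc HB zS.
  by case: hy => ?; subst y; [left|right].
have card12 := Q12_card S cN cE.
have a1 := a_Q1 cE NS.
have b2 := b_Q2 ES ab.
have c1 : (1 <= l)%N by rewrite /l cardfs_gt0; apply/fset0Pn; exists cN.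
have c2 : (1 <= #|` Q2 S cN cE|)%N by rewrite cardfs_gt0; apply/fset0Pn; exists cE.
have Sn := card_D0 (oP HB) Pn.
split.
- apply/andP; split => //; move: card12 c2 Sn; rewrite /l /S; clear; lia.
- split; first apply: (polyo_mv good_mirr) => //; first exact: (Q1_conn ES ab HS).
  rewrite /typeB /typeA !(mem_mv good_mirr) /mvinv /mirr; norm.
  have nS x : x \notin S -> x \notin Q1 S cN cE.
    by move=> h; apply/negP => /Q1_sub; apply/negP.
  rewrite a1 (inQ1 _ _ _ cE) b2 /=; apply/andP; split; first (apply/andP; split); last first.
  + case: (boolP (cNE \in P)) => h; last by apply: nS; rewrite in_fsetD1 (negbTE h) andbF.
    rewrite inQ1; apply/negP => /andP[/negP []].
    apply: (Q2_close b2); last by vm_compute.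
    by rewrite /Sa !in_fsetD1 h andbT; vm_compute.
  + by apply: nS; rewrite in_fsetD1 (negbTE o5) andbF.
  + by apply: nS; rewrite in_fsetD1 /origin eqxx.
- split; first apply: (polyo_mv good_transp) => //; first exact: (Q2_conn ES ab).
  + move: card12 c2 Sn; rewrite /l /S; clear; lia.
  rewrite /typeB /typeA !(mem_mv good_transp) /mvinv /transp; norm.
  have nS x : x \notin S -> x \notin Q2 S cN cE.
    by move=> h; apply/negP => /Q2_sub; apply/negP.
  rewrite b2 /=; apply/andP; split; first apply/and3P; first split.
  + by apply: nS; rewrite in_fsetD1 (negbTE o3) andbF.
  + by apply: nS; rewrite in_fsetD1 /origin eqxx.
  + by apply/negP => /Q2_neqa; rewrite eqxx.
  + by apply: nS; rewrite in_fsetD1 (negbTE o4) andbF.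
Qed.
End TypeB2.

Definition hA (P : {fset cell}) : nat * {fset cell} * {fset cell} :=
  if cW \notin P then (0%N, P, fset0)
  else (#|` Q1 P cW origin|, mv rotcw cW @` Q1 P cW origin, Q2 P cW origin).

Section TypeA.
Variables (P : {fset cell}) (n : nat).
Hypotheses (Pc : conn_set P) (Pn : #|` P| = n) (HA : typeA P origin).

Lemma caseA0 : cW \notin P -> pairsB n P.
Proof.
move=> WP; split; first by split => //; apply/edge_connectedP.
by rewrite /typeB HA /=; norm.
Qed.

Lemma caseA1 : cW \in P ->
  let l := #|` Q1 P cW origin| in
  [/\ (1 <= l < n)%N, pairsB l (mv rotcw cW @` Q1 P cW origin)
    & pairsB (n - l) (Q2 P cW origin)].
Proof.
move=> WP l; have [o1 o2 o3 o4] := typeA_facts HA.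
have ab : cW != origin by vm_compute.
have HS z : z \in P -> conn (fun w => w \in P) z cW \/ conn (fun w => w \in P) z origin.
  by move=> zP; left; exact: Pc.
have card12 := Q12_card P cW origin.
have a1 := a_Q1 origin WP.
have b2 := b_Q2 o1 ab.
have c1 : (1 <= l)%N by rewrite /l cardfs_gt0; apply/fset0Pn; exists cW.
have c2 : (1 <= #|` Q2 P cW origin|)%N by rewrite cardfs_gt0; apply/fset0Pn; exists origin.
split.
- apply/andP; split => //; move: card12 c2 Pn; rewrite /l; clear; lia.
- split; first apply: (polyo_mv good_rotcw) => //; first exact: (Q1_conn o1 ab HS).
  rewrite /typeB /typeA !(mem_mv good_rotcw) /mvinv /rotccw; norm.
  have nS x : x \notin P -> x \notin Q1 P cW origin.
    by move=> h; apply/negP => /Q1_sub; apply/negP.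
  apply/andP; split; first (apply/and4P; split).
  + exact: a1.
  + exact: nS.
  + by rewrite inQ1 b2.
  + case: (boolP (cN \in P)) => h; last exact: nS.
    rewrite inQ1; apply/negP => /andP[/negP []].
    apply: (Q2_close b2); last by vm_compute.
    by rewrite /Sa !in_fsetD1 h andbT; vm_compute.
  + exact: nS.
- split; first split.
  + apply/edge_connectedP; exact: (Q2_conn o1 ab).
  + move: card12 c2 Pn; rewrite /l; clear; lia.
  rewrite /typeB /typeA; norm.
  have nS x : x \notin P -> x \notin Q2 P cW origin.
    by move=> h; apply/negP => /Q2_sub; apply/negP.
  apply/andP; split; first (apply/and4P; split).
  + exact: b2.
  + exact: nS.
  + exact: nS.
  + exact: nS.
  + by apply/negP => /Q2_neqa; rewrite eqxx.
Qed.
End TypeA.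
Lemma count_inj (T U : choiceType) (X : {fset T}) (s : seq U) (h : T -> U) :
  {in X &, injective h} -> (forall x, x \in X -> h x \in s) -> (#|` X| <= size s)%N.
Proof.
move=> hi hs; rewrite -(size_map h); apply: uniq_leq_size.
  rewrite map_inj_in_uniq ?fset_uniq //.
move=> y /mapP [x xX ->]; exact: hs.
Qed.

Lemma size_fl (X Y : nat -> {fset {fset cell}}) (t : nat -> nat) (r : seq nat) :
  size (flatten [seq [seq (t l, q1, q2) | q1 <- enum_fset (X l), q2 <- enum_fset (Y l)] | l <- r])
  = (\sum_(l <- r) #|` X l| * #|` Y l|)%N.
Proof.
elim: r => [|l r IH] /=; first by rewrite big_nil.
by rewrite big_cons size_cat size_allpairs IH.
Qed.

Lemma in_fl (X Y : nat -> {fset {fset cell}}) (t : nat -> nat) (r : seq nat) l q1 q2 :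
  l \in r -> q1 \in X l -> q2 \in Y l ->
  (t l, q1, q2) \in flatten [seq [seq (t l, q1, q2) | q1 <- enum_fset (X l), q2 <- enum_fset (Y l)] | l <- r].
Proof.
move=> lr h1 h2; apply/flatten_mapP; exists l => //.
exact: (allpairs_f (fun a b => (t l, a, b))).
Qed.

Lemma inB l q : pairsB l q -> q \in fset_set (pairsB l).
Proof. by move=> h; rewrite in_fset_set ?inE //; exact: finB. Qed.
Lemma inA l q : pairsA l q -> q \in fset_set (pairsA l).
Proof. by move=> h; rewrite in_fset_set ?inE //; exact: finA. Qed.
Lemma ofB l q : q \in fset_set (pairsB l) -> pairsB l q.
Proof. by rewrite in_fset_set ?inE //; exact: finB. Qed.
Lemma ofA l q : q \in fset_set (pairsA l) -> pairsA l q.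
Proof. by rewrite in_fset_set ?inE //; exact: finA. Qed.

Lemma mvK_set L Li (HL : good L Li) a (X : {fset cell}) : mvinv Li a @` (mv L a @` X) = X.
Proof.
have HLi : good Li L by case: HL => h1 h2 h3; split => // u v; rewrite -h3 !h2.
apply/fsetP => z.
have e : z = mvinv Li a (mv L a z) by rewrite (mvK HL).
rewrite [in LHS]e (mem_imfset _ _ (can_inj (mvKV HL a))).
by rewrite (mem_mv HL) (mvK HL).
Qed.
Definition decodeB (x : nat * {fset cell} * {fset cell}) : {fset cell} :=
  let: (t, A, B) := x in
  if t == 0%N then origin |` (mvinv id cN @` A)
  else if t == 1%N then origin |` (mvinv transp cE @` A)
  else origin |` ((mvinv mirr cN @` A) `|` (mvinv transp cE @` B)).

Definition decodeA (x : nat * {fset cell} * {fset cell}) : {fset cell} :=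
  let: (t, A, B) := x in
  if t == 0%N then A else (mvinv rotccw cW @` A) `|` B.

Lemma decodeB_hB P : typeB P origin -> decodeB (hB P) = P.
Proof.
move=> HB; have o1 := oP HB.
rewrite /hB; case: ifP => EP /=; first by rewrite (mvK_set good_id) fsetD1K.
case: ifP => NP /=; first by rewrite (mvK_set good_transp) fsetD1K.
have a1 : cN \in Q1 (P `\ origin) cN cE by apply: a_Q1; rewrite in_fsetD1 (negbFE NP).
have : (0 < #|` Q1 (P `\ origin) cN cE|)%N by rewrite cardfs_gt0; apply/fset0Pn; exists cN.
case: (#|` _|) => // k _ /=.
by rewrite (mvK_set good_mirr) (mvK_set good_transp) Q12_union fsetD1K.
Qed.

Lemma decodeA_hA P : decodeA (hA P) = P.
Proof.
rewrite /hA; case: ifP => WP //=.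
have a1 : cW \in Q1 P cW origin by apply: a_Q1; rewrite (negbFE WP).
have : (0 < #|` Q1 P cW origin|)%N by rewrite cardfs_gt0; apply/fset0Pn; exists cW.
case: (#|` _|) => // k _ /=.
by rewrite (mvK_set good_rotcw) Q12_union.
Qed.

Definition sB (n : nat) : seq (nat * {fset cell} * {fset cell}) :=
  [seq (0%N, q, fset0) | q <- enum_fset (fset_set (pairsA n.-1))] ++
  [seq (1%N, q, fset0) | q <- enum_fset (fset_set (pairsB n.-1))] ++
  flatten [seq [seq (l.+1, q1, q2) | q1 <- enum_fset (fset_set (pairsB l)),
                                     q2 <- enum_fset (fset_set (pairsB (n.-1 - l)))]
          | l <- index_iota 1 n.-1].

Definition sA (n : nat) : seq (nat * {fset cell} * {fset cell}) :=
  [seq (0%N, q, fset0) | q <- enum_fset (fset_set (pairsB n))] ++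
  flatten [seq [seq (l, q1, q2) | q1 <- enum_fset (fset_set (pairsB l)),
                                  q2 <- enum_fset (fset_set (pairsB (n - l)))]
          | l <- index_iota 1 n].

Lemma boundB n : (2 <= n)%N ->
  (#|` fset_set (pairsB n)| <= #|` fset_set (pairsA n.-1)| + #|` fset_set (pairsB n.-1)| +
     \sum_(1 <= l < n.-1) #|` fset_set (pairsB l)| * #|` fset_set (pairsB (n.-1 - l))|)%N.
Proof.
move=> n2.
have -> : (#|` fset_set (pairsA n.-1)| + #|` fset_set (pairsB n.-1)| +
     \sum_(1 <= l < n.-1) #|` fset_set (pairsB l)| * #|` fset_set (pairsB (n.-1 - l))|)%N
   = size (sB n).
  by rewrite /sB !size_cat !size_map (size_fl (fun l => fset_set (pairsB l))
        (fun l => fset_set (pairsB (n.-1 - l))) S) addnA.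
apply: (count_inj (h := hB)).
  by move=> P P' /ofB [_ HP] /ofB [_ HP'] e; rewrite -(decodeB_hB HP) e decodeB_hB.
move=> P /ofB [[Pc Pn] HB]; move/edge_connectedP: Pc => Pc.
rewrite /sB !mem_cat; rewrite /hB; case: ifP => EP.
  by rewrite (map_f (fun q => (0%N, q, fset0))) // inA //; apply: caseB1.
case: ifP => NP.
  by rewrite (map_f (fun q => (1%N, q, fset0))) ?orbT // inB //; apply: caseB2 => //; rewrite (negbFE EP).
have [h1 h2 h3] := caseB3 Pc Pn HB (negbFE EP) (negbFE NP).
apply/orP; right; apply/orP; right; apply: in_fl.
- by rewrite mem_index_iota.
- exact: inB.
- exact: inB.
Qed.

Lemma boundA n : (1 <= n)%N ->
  (#|` fset_set (pairsA n)| <= #|` fset_set (pairsB n)| +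
     \sum_(1 <= l < n) #|` fset_set (pairsB l)| * #|` fset_set (pairsB (n - l))|)%N.
Proof.
move=> n1.
have -> : (#|` fset_set (pairsB n)| +
     \sum_(1 <= l < n) #|` fset_set (pairsB l)| * #|` fset_set (pairsB (n - l))|)%N
   = size (sA n).
  by rewrite /sA !size_cat !size_map (size_fl (fun l => fset_set (pairsB l))
        (fun l => fset_set (pairsB (n - l))) id).
apply: (count_inj (h := hA)).
  by move=> P P' _ _ e; rewrite -(decodeA_hA P) e decodeA_hA.
move=> P /ofA [[Pc Pn] HA]; have Pc' := Pc; move/edge_connectedP: Pc => Pc.
rewrite /sA !mem_cat; rewrite /hA; case: ifP => WP.
  by rewrite (map_f (fun q => (0%N, q, fset0))) // inB //; apply: caseA0.
have [h1 h2 h3] := caseA1 Pc Pn HA (negbFE WP).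
apply/orP; right; apply: (@in_fl (fun l => fset_set (pairsB l)) (fun l => fset_set (pairsB (n - l))) id).
- by rewrite mem_index_iota.
- exact: inB.
- exact: inB.
Qed.
Lemma fE n : n != 0%N -> f n = #|` fset_set (pairsA n)|.
Proof. by rewrite /f => /negbTE ->. Qed.
Lemma gE n : n != 0%N -> g n = #|` fset_set (pairsB n)|.
Proof. by rewrite /g => /negbTE ->. Qed.

Lemma g1 : (#|` fset_set (pairsB 1)| <= 1)%N.
Proof.
apply: (count_inj (h := id) (s := [:: [fset origin]])) => //.
move=> P /ofB [[_ /eqP /cardfs1P [x ->]] HB]; rewrite inE; apply/eqP.
have := oP HB; rewrite inE => /eqP ->; done.
Qed.

Lemma sum_le (a b : nat -> nat) m k :
  (forall l, (m <= l < k)%N -> (a l <= b l)%N) ->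
  (\sum_(m <= l < k) a l <= \sum_(m <= l < k) b l)%N.
Proof.
move=> h; rewrite big_nat_cond [X in (_ <= X)%N]big_nat_cond.
by apply: leq_sum => l /andP[hl _]; exact: h.
Qed.

Theorem mainTheorem2 (F G : nat -> nat) :
  F 0 = 1%N -> F 1 = 1%N -> G 0 = 1%N -> G 1 = 1%N ->
  (forall n, (2 <= n)%N ->
     F n = (G n + \sum_(1 <= l < n) G l * G (n - l))%N) ->
  (forall n, (2 <= n)%N ->
     G n = (F n.-1 + G n.-1 + \sum_(1 <= l < n.-1) G l * G (n.-1 - l))%N) ->
  (forall n, (1 <= n)%N -> finite_set (pairsA n) /\ finite_set (pairsB n)) /\
  (forall n, (f n <= F n)%N /\ (g n <= G n)%N).
Proof.
move=> F0 F1 G0 G1 HF HG; split; first by move=> n _; split; [exact: finA|exact: finB].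
suff H : forall N n, (n <= N)%N -> (f n <= F n)%N /\ (g n <= G n)%N.
  by move=> n; exact: (H n).
elim=> [|N IH] n hn.
  have -> : n = 0%N by lia.
  by rewrite F0 G0 /f /g; split.
case: (leqP n N) => hnN; first exact: IH.
have {hnN hn} -> : n = N.+1 by lia.
case: N IH => [|N] IH.
  have gb : (g 1 <= G 1)%N by rewrite G1 gE //; exact: g1.
  split => //; rewrite F1 fE //; apply: leq_trans (boundA (n:=1) _) _ => //.
  by move: gb; rewrite G1 big_geq // addn0 -gE.
have IHf m : (m <= N.+1)%N -> m != 0%N -> (#|` fset_set (pairsA m)| <= F m)%N.
  by move=> h1 h2; rewrite -fE //; case: (IH m h1).
have IHg m : (m <= N.+1)%N -> m != 0%N -> (#|` fset_set (pairsB m)| <= G m)%N.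
  by move=> h1 h2; rewrite -gE //; case: (IH m h1).
have gb : (g N.+2 <= G N.+2)%N.
  rewrite gE // HG //; apply: leq_trans (boundB _) _ => //=.
  apply: leq_add; first apply: leq_add; [exact: IHf|exact: IHg|].
  apply: sum_le => l /andP[h1 h2]; apply: leq_mul; apply: IHg; lia.
split => //; rewrite fE // HF //; apply: leq_trans (boundA _) _ => //.
apply: leq_add; first by rewrite -gE.
apply: sum_le => l /andP[h1 h2]; apply: leq_mul.
  by rewrite -gE ?(lt0n_neq0 h1) //; case: (IH l _) => //; lia.
by rewrite -gE; [case: (IH (N.+2 - l) _) => //; lia | lia].
Qed.
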